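(* For all $k,l\ge1$ and every $X\in\mathfrak{W}'_k$, the operator $(\lambda(X)-X)L_{z_l}$ on $\mathfrak{H}^1$ belongs to $\mathfrak{W}'_{k+l}$.
   Context: Let $\mathfrak{H}=\mathbb{Q}\langle x,y\rangle$, $\mathfrak{H}^1=\mathbb{Q}+\mathfrak{H}y$, $\mathfrak{H}^1_n$ its homogeneous part of degree $n$; $L_w(w')=ww'$; products of operators denote composition. Let $z_k=x^{k-1}y$. The harmonic product $\ast$ on $\mathfrak{H}^1$ is the $\mathbb{Q}$-bilinear map with $1\ast w=w\ast1=w$ and $z_kw\ast z_lw'=z_k(w\ast z_lw')+z_l(z_kw\ast w')+z_{k+l}(w\ast w')$; $\mathcal{H}_w(v)=w\ast v$. $\mathfrak{W}$ is the $\mathbb{Q}$-span of the operators $\mathcal{H}_w$ ($w\in\mathfrak{H}^1$) on $\mathfrak{H}^1$; $\mathfrak{W}'$ (resp. $\mathfrak{W}'_n$) the $\mathbb{Q}$-span of the operators $L_{z_k}\mathcal{H}_w$ on $\mathfrak{H}^1$ with $k\ge1$, $w\in\mathfrak{H}^1$ (resp. $1\le k\le n$, $w\in\mathfrak{H}^1_{n-k}$). The $L_{z_k}\mathcal{H}_w$ over distinct pairs $(k,w)$, $w$ a word, are linearly independent, and $\lambda:\mathfrak{W}'\to\mathfrak{W}$ is the $\mathbb{Q}$-linear map with $\lambda(L_{z_k}\mathcal{H}_w)=\mathcal{H}_{z_kw}$. *)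

(* Defs.v *)
From HB Require Import structures.
From mathcomp Require Import all_boot all_order all_algebra.
Set Implicit Arguments. Unset Strict Implicit. Unset Printing Implicit Defensive.
Import Order.TTheory GRing.Theory Num.Theory.
Local Open Scope ring_scope.

(* A word of H^1 is z_{a_1} ... z_{a_r}, encoded as the list [:: a_1; ...; a_r]
   with all a_i >= 1 (z_k = x^{k-1} y).  An element of H^1 is represented by its
   coefficient function (seq nat -> rat); we only ever build finite combinations. *)
Definition word1 (v : seq nat) : bool := all (fun a => (0 < a)%N) v.

(* degree of the word z_{a_1}...z_{a_r} in H = Q<x,y> *)
Definition wdeg (v : seq nat) : nat := sumn v.

Definition delta (u : seq nat) : seq nat -> rat := fun w => (w == u)%:R.

Definition Lz (k : nat) (f : seq nat -> rat) : seq nat -> rat :=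
  fun w => match w with
           | a :: w' => if a == k then f w' else 0
           | [::] => 0
           end.

Definition addf (f g : seq nat -> rat) : seq nat -> rat := fun w => f w + g w.

Fixpoint harm (u : seq nat) : seq nat -> seq nat -> rat :=
  match u with
  | [::] => fun v => delta v
  | a :: u' =>
      fix harm' (v : seq nat) : seq nat -> rat :=
        match v with
        | [::] => delta (a :: u')
        | b :: v' =>
            addf (Lz a (harm u' (b :: v')))
                 (addf (Lz b (harm' v')) (Lz (a + b) (harm u' v')))
        end
  end.

(* An element of W'_n is given by a finite family of triples (c, k, w),
   standing for sum c * L_{z_k} H_w, with 1 <= k <= n and w a word of degree n-k. *)
Definition inWn (n : nat) (F : seq (rat * nat * seq nat)) : bool :=
  all (fun t => [&& (0 < t.1.2)%N, (t.1.2 <= n)%N, word1 t.2 & wdeg t.2 == (n - t.1.2)%N]) F.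

Definition opW (F : seq (rat * nat * seq nat)) (v : seq nat) : seq nat -> rat :=
  fun w => \sum_(t <- F) t.1.1 * Lz t.1.2 (harm t.2 v) w.

(* lambda of that operator: sum c * H_{z_k w}, applied to a word v *)
Definition lamW (F : seq (rat * nat * seq nat)) (v : seq nat) : seq nat -> rat :=
  fun w => \sum_(t <- F) t.1.1 * harm (t.1.2 :: t.2) v w.

(* Main.v *)
Require Import Defs.
From mathcomp Require Import all_boot all_order all_algebra.
Import GRing.Theory.
Local Open Scope ring_scope.

Fixpoint mkG (l : nat) (F : seq (rat * nat * seq nat)) : seq (rat * nat * seq nat) :=
  match F with
  | [::] => [::]
  | t :: F' => (t.1.1, l, t.1.2 :: t.2) :: (t.1.1, (t.1.2 + l)%N, t.2) :: mkG l F'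
  end.

Lemma harm_cons2 a u b v : harm (a :: u) (b :: v) =
  Defs.addf (Lz a (harm u (b :: v))) (Defs.addf (Lz b (harm (a :: u) v)) (Lz (a + b)%N (harm u v))).
Proof. by []. Qed.

Lemma mkG_ok l F v w : lamW F (l :: v) w - opW F (l :: v) w = opW (mkG l F) v w.
Proof.
elim: F => [|t F IH]; first by rewrite /lamW /opW /= !big_nil subrr.
rewrite /lamW /opW /= !big_cons -/(lamW F (l :: v) w) -/(opW F (l :: v) w)
  -/(opW (mkG l F) v w) -IH.
case: t => [[c a] u] /=.
rewrite /Defs.addf !mulrDr.
move: (c * Lz a _ w) (c * Lz l _ w) (c * Lz (a+l) _ w) (lamW _ _ _) (opW _ _ _) => A B C L O.
rewrite opprD -!addrA (addrCA L (-A)) (addrCA C (-A)) (addrCA B (-A)) addNKr.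
by [].
Qed.

Lemma mkG_in k l F : (1 <= l)%N -> inWn k F -> inWn (k + l) (mkG l F).
Proof.
move=> hl; elim: F => [|[[c a] u] F IH] //= /andP[/and4P[ha hak hu hd] /IH ->].
rewrite andbT /= hl ha hu leq_addl addnK (eqP hd) subnKC // addn_gt0 ha.
rewrite leq_add2r hak subnDr eqxx.
by rewrite eqxx.
Qed.

Theorem mainTheorem12 (k l : nat) (hk : (1 <= k)%N) (hl : (1 <= l)%N)
    (F : seq (rat * nat * seq nat)) (hF : inWn k F) :
  exists G : seq (rat * nat * seq nat), inWn (k + l) G /\
    forall v : seq nat, word1 v ->
      forall w : seq nat, lamW F (l :: v) w - opW F (l :: v) w = opW G v w.
Proof.
exists (mkG l F); split; first exact: mkG_in.
by move=> v _ w; apply: mkG_ok.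
Qed.
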